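(* Let $R$ be one of the chain rings $\mathbb{G}_4=\mathbb{Z}_4[X]/(X^2+X+1)$, $\mathbb{S}_4=\mathbb{F}_4[X]/(X^2)$, $\mathbb{T}_4=\mathbb{F}_4[X;a\mapsto a^2]/(X^2)$. Then there exists a projective $(201,13)$-arc in $\mathrm{PHG}(2,R)$.
   Context: $\mathbb{F}_4[X;a\mapsto a^2]$ denotes the skew polynomial ring with commutation rule $Xa=a^2X$. For a finite chain ring $R$ of length $2$ with residue field $\mathbb{F}_q$, the projective Hjelmslev plane $\mathrm{PHG}(2,R)$ is the incidence structure whose points are the free rank-$1$ submodules of the right module $R_R^3$, whose lines are the free rank-$2$ submodules of $R_R^3$, with incidence given by inclusion. A projective $(k,n)$-arc is a set of $k$ points meeting every line in at most $n$ points. *)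

(* Defs.v *)
From HB Require Import structures.
From mathcomp Require Import all_boot all_order all_algebra ring.
Set Implicit Arguments. Unset Strict Implicit. Unset Printing Implicit Defensive.
Import GRing.Theory.
Local Open Scope ring_scope.

(* The field F_4 = F_2[w]/(w^2+w+1), element a + b w encoded as (a,b). *)
Inductive F4 := MkF4 of bool * bool.
Definition f4val (x : F4) := let: MkF4 p := x in p.
HB.instance Definition _ := [isNew for f4val].
HB.instance Definition _ := [Finite of F4 by <:].

Definition f40 := MkF4 (false, false).
Definition f41 := MkF4 (true, false).
Definition f4add (x y : F4) :=
  let: MkF4 (a, b) := x in let: MkF4 (c, d) := y in MkF4 (addb a c, addb b d).
Definition f4opp (x : F4) := x.
(* (a + b w)(c + d w) = (ac + bd) + (ad + bc + bd) w *)
Definition f4mul (x y : F4) :=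
  let: MkF4 (a, b) := x in let: MkF4 (c, d) := y in
  MkF4 (addb (a && c) (b && d), addb (addb (a && d) (b && c)) (b && d)).

Lemma f4addA : associative f4add.
Proof. by move=> [[[] []]] [[[] []]] [[[] []]]. Qed.
Lemma f4addC : commutative f4add.
Proof. by move=> [[[] []]] [[[] []]]. Qed.
Lemma f4add0 : left_id f40 f4add.
Proof. by move=> [[[] []]]. Qed.
Lemma f4addN : left_inverse f40 f4opp f4add.
Proof. by move=> [[[] []]]. Qed.
Lemma f4mulA : associative f4mul.
Proof. by move=> [[[] []]] [[[] []]] [[[] []]]. Qed.
Lemma f4mulC : commutative f4mul.
Proof. by move=> [[[] []]] [[[] []]]. Qed.
Lemma f4mul1 : left_id f41 f4mul.
Proof. by move=> [[[] []]]. Qed.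
Lemma f4mulDl : left_distributive f4mul f4add.
Proof. by move=> [[[] []]] [[[] []]] [[[] []]]. Qed.
Lemma f4one_neq0 : f41 != f40. Proof. by []. Qed.

HB.instance Definition _ := GRing.isZmodule.Build F4 f4addA f4addC f4add0 f4addN.
HB.instance Definition _ := GRing.Zmodule_isComNzRing.Build F4
  f4mulA f4mulC f4mul1 f4mulDl f4one_neq0.

Definition f4frob (x : F4) : F4 := x ^+ 2.

(* S_4 = F_4[X]/(X^2): element a + b t (t = class of X), t^2 = 0.      *)
Inductive S4 := MkS4 of F4 * F4.
Definition s4val (x : S4) := let: MkS4 p := x in p.
HB.instance Definition _ := [isNew for s4val].
HB.instance Definition _ := [Finite of S4 by <:].

Definition s4zero := MkS4 (0, 0).
Definition s4one := MkS4 (1, 0).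
Definition s4add (x y : S4) :=
  let: MkS4 (a, b) := x in let: MkS4 (c, d) := y in MkS4 (a + c, b + d).
Definition s4opp (x : S4) := let: MkS4 (a, b) := x in MkS4 (- a, - b).
Definition s4mul (x y : S4) :=
  let: MkS4 (a, b) := x in let: MkS4 (c, d) := y in MkS4 (a * c, a * d + b * c).

Lemma s4addA : associative s4add.
Proof. by move=> [[a b]] [[c d]] [[e f]]; congr (MkS4 (_, _)); ring. Qed.
Lemma s4addC : commutative s4add.
Proof. by move=> [[a b]] [[c d]]; congr (MkS4 (_, _)); ring. Qed.
Lemma s4add0 : left_id s4zero s4add.
Proof. by move=> [[a b]]; congr (MkS4 (_, _)); ring. Qed.
Lemma s4addN : left_inverse s4zero s4opp s4add.
Proof. by move=> [[a b]]; congr (MkS4 (_, _)); ring. Qed.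
Lemma s4mulA : associative s4mul.
Proof. by move=> [[a b]] [[c d]] [[e f]]; congr (MkS4 (_, _)); ring. Qed.
Lemma s4mul1 : left_id s4one s4mul.
Proof. by move=> [[a b]]; congr (MkS4 (_, _)); ring. Qed.
Lemma s4mulr1 : right_id s4one s4mul.
Proof. by move=> [[a b]]; congr (MkS4 (_, _)); ring. Qed.
Lemma s4mulDl : left_distributive s4mul s4add.
Proof. by move=> [[a b]] [[c d]] [[e f]]; congr (MkS4 (_, _)); ring. Qed.
Lemma s4mulDr : right_distributive s4mul s4add.
Proof. by move=> [[a b]] [[c d]] [[e f]]; congr (MkS4 (_, _)); ring. Qed.
Lemma s4one_neq0 : s4one != s4zero. Proof. by []. Qed.

HB.instance Definition _ := GRing.isNzRing.Build S4 s4addA s4addC s4add0 s4addN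
  s4mulA s4mul1 s4mulr1 s4mulDl s4mulDr s4one_neq0.

(* T_4 = F_4[X; a |-> a^2]/(X^2): element a + b t, with t c = c^2 t,   *)
(* t^2 = 0.  (a + b t)(c + d t) = ac + (ad + b c^2) t.                  *)
Inductive T4 := MkT4 of F4 * F4.
Definition t4val (x : T4) := let: MkT4 p := x in p.
HB.instance Definition _ := [isNew for t4val].
HB.instance Definition _ := [Finite of T4 by <:].

Definition t4zero := MkT4 (0, 0).
Definition t4one := MkT4 (1, 0).
Definition t4add (x y : T4) :=
  let: MkT4 (a, b) := x in let: MkT4 (c, d) := y in MkT4 (a + c, b + d).
Definition t4opp (x : T4) := let: MkT4 (a, b) := x in MkT4 (- a, - b).
Definition t4mul (x y : T4) :=
  let: MkT4 (a, b) := x in let: MkT4 (c, d) := y in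
  MkT4 (a * c, a * d + b * f4frob c).

Lemma f4frobD (x y : F4) : f4frob (x + y) = f4frob x + f4frob y.
Proof. by move: x y => [[[] []]] [[[] []]]. Qed.
Lemma f4frobM (x y : F4) : f4frob (x * y) = f4frob x * f4frob y.
Proof. by rewrite /f4frob exprMn. Qed.
Lemma f4frob1 : f4frob 1 = 1.
Proof. by rewrite /f4frob expr1n. Qed.

Lemma t4addA : associative t4add.
Proof. by move=> [[a b]] [[c d]] [[e f]]; congr (MkT4 (_, _)); ring. Qed.
Lemma t4addC : commutative t4add.
Proof. by move=> [[a b]] [[c d]]; congr (MkT4 (_, _)); ring. Qed.
Lemma t4add0 : left_id t4zero t4add.
Proof. by move=> [[a b]]; congr (MkT4 (_, _)); ring. Qed.
Lemma t4addN : left_inverse t4zero t4opp t4add.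
Proof. by move=> [[a b]]; congr (MkT4 (_, _)); ring. Qed.
Lemma t4mulA : associative t4mul.
Proof.
by move=> [[a b]] [[c d]] [[e f]]; rewrite /t4mul f4frobM;
  congr (MkT4 (_, _)); ring.
Qed.
Lemma t4mul1 : left_id t4one t4mul.
Proof. by move=> [[a b]]; congr (MkT4 (_, _)); ring. Qed.
Lemma t4mulr1 : right_id t4one t4mul.
Proof.
move=> [[a b]]; congr (MkT4 (_, _)); first by rewrite mulr1.
by move: a b => [[[] []]] [[[] []]].
Qed.
Lemma t4mulDl : left_distributive t4mul t4add.
Proof. by move=> [[a b]] [[c d]] [[e f]]; congr (MkT4 (_, _)); ring. Qed.
Lemma t4mulDr : right_distributive t4mul t4add.
Proof.
by move=> [[a b]] [[c d]] [[e f]]; rewrite /t4mul /t4add f4frobD;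
  congr (MkT4 (_, _)); ring.
Qed.
Lemma t4one_neq0 : t4one != t4zero. Proof. by []. Qed.

HB.instance Definition _ := GRing.isNzRing.Build T4 t4addA t4addC t4add0 t4addN
  t4mulA t4mul1 t4mulr1 t4mulDl t4mulDr t4one_neq0.

(* G_4 = Z_4[X]/(X^2+X+1) (Galois ring GR(16,4)): element a + b x with *)
(* a, b in Z/4Z and x^2 = -1 - x.                                      *)
Inductive G4 := MkG4 of 'Z_4 * 'Z_4.
Definition g4val (x : G4) := let: MkG4 p := x in p.
HB.instance Definition _ := [isNew for g4val].
HB.instance Definition _ := [Finite of G4 by <:].

Definition g4zero := MkG4 (0, 0).
Definition g4one := MkG4 (1, 0).
Definition g4add (x y : G4) :=
  MkG4 ((g4val x).1 + (g4val y).1, (g4val x).2 + (g4val y).2).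
Definition g4opp (x : G4) := MkG4 (- (g4val x).1, - (g4val x).2).
Definition g4mul (x y : G4) :=
  let: MkG4 (a, b) := x in let: MkG4 (c, d) := y in
  MkG4 (a * c - b * d, a * d + b * c - b * d).

Lemma g4addA : associative g4add.
Proof. by move=> [[a b]] [[c d]] [[e f]]; congr (MkG4 (_, _)); rewrite /= addrA. Qed.
Lemma g4addC : commutative g4add.
Proof. by move=> [[a b]] [[c d]]; congr (MkG4 (_, _)); rewrite /= addrC. Qed.
Lemma g4add0 : left_id g4zero g4add.
Proof. by move=> [[a b]]; congr (MkG4 (_, _)); rewrite /= add0r. Qed.
Lemma g4addN : left_inverse g4zero g4opp g4add.
Proof. by move=> [[a b]]; congr (MkG4 (_, _)); rewrite /= addNr. Qed.
Lemma g4mulA : associative g4mul.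
Proof. move=> [[a b]] [[c d]] [[e f]]; rewrite /g4mul /=; congr (MkG4 (_, _)); ring. Qed.
Lemma g4mul1 : left_id g4one g4mul.
Proof. move=> [[a b]]; rewrite /g4mul /=; congr (MkG4 (_, _)); ring. Qed.
Lemma g4mulr1 : right_id g4one g4mul.
Proof. move=> [[a b]]; rewrite /g4mul /=; congr (MkG4 (_, _)); ring. Qed.
Lemma g4mulDl : left_distributive g4mul g4add.
Proof. move=> [[a b]] [[c d]] [[e f]]; rewrite /g4mul /g4add /=; congr (MkG4 (_, _)); ring. Qed.
Lemma g4mulDr : right_distributive g4mul g4add.
Proof. move=> [[a b]] [[c d]] [[e f]]; rewrite /g4mul /g4add /=; congr (MkG4 (_, _)); ring. Qed.
Lemma g4one_neq0 : g4one != g4zero. Proof. by []. Qed.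

HB.instance Definition _ := GRing.isNzRing.Build G4 g4addA g4addC g4add0 g4addN
  g4mulA g4mul1 g4mulr1 g4mulDl g4mulDr g4one_neq0.

(* Vectors of R^3 are row vectors 'rV[R]_3; R^3 is a RIGHT R-module.   *)

Section PHG.
Variable R : finNzRingType.

Definition rscale (v : 'rV[R]_3) (r : R) : 'rV[R]_3 := \row_j (v 0 j * r).

Definition rcomb (k : nat) (B : 'I_k -> 'rV[R]_3) (c : {ffun 'I_k -> R}) : 'rV[R]_3 :=
  \sum_(i < k) rscale (B i) (c i).

Definition free_submodule (k : nat) (S : {set 'rV[R]_3}) : Prop :=
  exists B : 'I_k -> 'rV[R]_3,
    S = [set rcomb B c | c : {ffun 'I_k -> R}] /\ injective (rcomb B).

Definition phg_point (P : {set 'rV[R]_3}) : Prop := free_submodule 1 P.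
Definition phg_line (L : {set 'rV[R]_3}) : Prop := free_submodule 2 L.

Definition proj_arc (k n : nat) (A : {set {set 'rV[R]_3}}) : Prop :=
  [/\ forall P, P \in A -> phg_point P,
      #|A| = k &
      forall L, phg_line L -> #|[set P in A | P \subset L]| <= n]%N.
End PHG.

(* Main.v *)
Require Import Defs.
From HB Require Import structures.
From mathcomp Require Import all_boot all_order all_algebra.
Set Implicit Arguments. Unset Strict Implicit. Unset Printing Implicit Defensive.
Import GRing.Theory.
Local Open Scope ring_scope.


Section Gen.
Variable R : finNzRingType.

Definition V := (R * R * R)%type.
Definition crd (v : V) (j : 'I_3) : R :=
  match val j with 0 => v.1.1 | 1 => v.1.2 | _ => v.2 end.
Definition tovec (v : V) : 'rV[R]_3 := \row_j crd v j.
Definition pt (v : V) : {set 'rV[R]_3} :=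
  [set rcomb (fun _ : 'I_1 => tovec v) c | c : {ffun 'I_1 -> R}].

Variables (els : seq R) (isu : R -> bool) (addf mulf subf : R -> R -> R) (eqf : R -> R -> bool)
  (zero one : R).

Definition fval (l v : V) : R :=
  addf (addf (mulf l.1.1 v.1.1) (mulf l.1.2 v.1.2)) (mulf l.2 v.2).
Definition vmul (w : V) (c : R) : V := (mulf w.1.1 c, mulf w.1.2 c, mulf w.2 c).
Definition subv (v w : V) (a : R) : V :=
  (subf w.1.1 (mulf v.1.1 a), subf w.1.2 (mulf v.1.2 a), subf w.2 (mulf v.2 a)).
Definition eqV (v w : V) : bool := [&& eqf v.1.1 w.1.1, eqf v.1.2 w.1.2 & eqf v.2 w.2].
Definition chk (r : V) : bool := [|| isu r.1.1, isu r.1.2 | isu r.2].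
Definition good (v w : V) : bool :=
  [|| eqf v.1.1 one && chk (subv v w w.1.1),
      eqf v.1.2 one && chk (subv v w w.1.2) |
      eqf v.2 one && chk (subv v w w.2)].
Definition normd (v : V) : bool := [|| eqf v.1.1 one, eqf v.1.2 one | eqf v.2 one].

Definition allchecks (reps lns : seq V) : bool :=
  [&& size reps == 201%N, uniq reps, all normd reps,
      all (fun x => ~~ isu x || has (fun y => eqf (mulf y x) one) els) els,
      all (fun v => leq (count (fun w => ~~ good v w) reps) 13) reps,
      all (fun v => let ls := filter (fun l => eqf (fval l v) zero) lns in
                    all (fun w => if good v w then has (fun l => eqf (fval l w) zero) ls
                                  else eqV v w || all (fun c => ~~ eqV (vmul w c) v) els) reps) reps
    & all (fun l => leq (count (fun v => eqf (fval l v) zero) reps) 13) lns].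

Hypothesis els_all : forall x : R, x \in els.
Hypothesis addfE : forall x y, addf x y = x + y.
Hypothesis mulfE : forall x y, mulf x y = x * y.
Hypothesis subfE : forall x y, subf x y = x - y.
Hypothesis eqfE : forall x y, eqf x y = (x == y).
Hypothesis zeroE : zero = 0.
Hypothesis oneE : one = 1.

End Gen.


Section Proofs.
Variable R : finNzRingType.
Variables (els : seq R) (isu : R -> bool) (addf mulf subf : R -> R -> R) (eqf : R -> R -> bool)
  (zero one : R).
Hypothesis els_all : forall x : R, x \in els.
Hypothesis addfE : forall x y, addf x y = x + y.
Hypothesis mulfE : forall x y, mulf x y = x * y.
Hypothesis subfE : forall x y, subf x y = x - y.
Hypothesis eqfE : forall x y, eqf x y = (x == y).
Hypothesis zeroE : zero = 0.
Hypothesis oneE : one = 1.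

Lemma tovecE (v : V R) j : tovec v 0 j = crd v j.
Proof. by rewrite mxE. Qed.

Lemma rcombE k (B : 'I_k -> 'rV[R]_3) c j :
  rcomb B c 0 j = \sum_(i < k) B i 0 j * c i.
Proof. by rewrite /rcomb summxE; apply: eq_bigr => i _; rewrite mxE. Qed.

Definition fv (l : V R) (x : 'rV[R]_3) : R := \sum_(j < 3) crd l j * x 0 j.

Lemma fvalE l v : fval addf mulf l v = fv l (tovec v).
Proof.
rewrite /fval /fv !addfE !mulfE !big_ord_recl big_ord0 !tovecE /= addr0 addrA.
by [].
Qed.


Definition pr2 (x y : 'rV[R]_3) (i : 'I_2) : 'rV[R]_3 := if val i == 0%N then x else y.
Definition i1 : 'I_2 := lift ord0 ord0.

Lemma sum2 (F : 'I_2 -> R) : \sum_(i < 2) F i = F ord0 + F i1.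
Proof. by rewrite !big_ord_recl big_ord0 addr0. Qed.

Lemma rcomb2E x y c j : rcomb (pr2 x y) c 0 j = x 0 j * c ord0 + y 0 j * c i1.
Proof. by rewrite rcombE sum2. Qed.

Lemma comb_in k (B : 'I_k -> 'rV[R]_3) x y c :
  x \in [set rcomb B d | d : {ffun 'I_k -> R}] ->
  y \in [set rcomb B d | d : {ffun 'I_k -> R}] ->
  rcomb (pr2 x y) c \in [set rcomb B d | d : {ffun 'I_k -> R}].
Proof.
move=> /imsetP [d _ ->] /imsetP [e _ ->].
apply/imsetP; exists [ffun i => d i * c ord0 + e i * c i1] => //.
apply/rowP => j; rewrite rcomb2E !rcombE !mulr_suml -big_split /=.
by apply: eq_bigr => i _; rewrite ffunE mulrDr !mulrA.
Qed.

Lemma card_span k (B : 'I_k -> 'rV[R]_3) : injective (rcomb B) ->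
  #|[set rcomb B d | d : {ffun 'I_k -> R}]| = #|{ffun 'I_k -> R}|.
Proof. by move=> inj; rewrite card_imset. Qed.

Lemma fv_comb l x y c : fv l (rcomb (pr2 x y) c) = fv l x * c ord0 + fv l y * c i1.
Proof.
rewrite /fv !mulr_suml -big_split /=; apply: eq_bigr => j _.
by rewrite rcomb2E mulrDr !mulrA.
Qed.


Lemma crd_subv v w a k : crd (subv mulf subf v w a) k = crd w k - crd v k * a.
Proof. by case: k => [[|[|[|m]]] hm]; rewrite /crd /= subfE mulfE. Qed.

Definition o0 : 'I_3 := @Ordinal 3 0 isT.
Definition o1 : 'I_3 := @Ordinal 3 1 isT.
Definition o2 : 'I_3 := @Ordinal 3 2 isT.

Lemma chkP r : chk isu r -> exists k, isu (crd r k).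
Proof.
by case/or3P => h; [exists o0 | exists o1 | exists o2].
Qed.

Lemma goodP v w : good isu mulf subf eqf one v w ->
  exists j0 k, crd v j0 = 1 /\ isu (crd w k - crd v k * crd w j0).
Proof.
case/or3P => /andP [e /chkP [k hk]]; move: e; rewrite eqfE oneE => /eqP e.
- by exists o0, k; rewrite -crd_subv.
- by exists o1, k; rewrite -crd_subv.
- by exists o2, k; rewrite -crd_subv.
Qed.

Hypothesis unitck : all (fun x => ~~ isu x || has (fun y => eqf (mulf y x) one) els) els.

Lemma isuP x : isu x -> exists y, y * x = 1.
Proof.
move=> hx; move/allP: unitck => /(_ x (els_all x)); rewrite hx /= => /hasP [y _].
by rewrite eqfE mulfE oneE => /eqP; exists y.
Qed.

Lemma good_scalar v w e0 e1 : good isu mulf subf eqf one v w ->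
  (forall j, crd v j * e0 + crd w j * e1 = 0) -> e0 = 0 /\ e1 = 0.
Proof.
case/goodP => j0 [k [hj /isuP [y hy]]] h.
have e0E : e0 = - (crd w j0 * e1).
  by apply/eqP; rewrite -subr_eq0 opprK; have := h j0; rewrite hj mul1r => ->.
have : (crd w k - crd v k * crd w j0) * e1 = 0.
  by rewrite mulrBl -mulrA -(h k) e0E mulrN addrC.
move=> h2; have e1z : e1 = 0 by rewrite -[e1]mul1r -hy -mulrA h2 mulr0.
by split=> //; rewrite e0E e1z mulr0 oppr0.
Qed.


Lemma ord2_cases (i : 'I_2) : i = ord0 \/ i = i1.
Proof.
case: i => [[|[|m]] hm]; [left | right | by []]; exact: val_inj.
Qed.

Lemma ord1_cases (i : 'I_1) : i = ord0.
Proof. by case: i => [[|m] hm] //; exact: val_inj. Qed.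

Lemma good_inj v w : good isu mulf subf eqf one v w ->
  injective (rcomb (pr2 (tovec v) (tovec w))).
Proof.
move=> g c d e.
have h j : crd v j * (c ord0 - d ord0) + crd w j * (c i1 - d i1) = 0.
  have := congr1 (fun M : 'rV[R]_3 => M 0 j) e; rewrite !rcomb2E !tovecE => ee.
  by rewrite !mulrBr addrACA -opprD ee subrr.
have [h0 h1] := good_scalar g h.
apply/ffunP => i; case: (ord2_cases i) => ->; apply/eqP; rewrite -subr_eq0.
  by rewrite h0. by rewrite h1.
Qed.


Lemma line_ker (B : 'I_2 -> 'rV[R]_3) v w l x :
  injective (rcomb B) ->
  tovec v \in [set rcomb B d | d : {ffun 'I_2 -> R}] ->
  tovec w \in [set rcomb B d | d : {ffun 'I_2 -> R}] ->
  good isu mulf subf eqf one v w -> fv l (tovec v) = 0 -> fv l (tovec w) = 0 ->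
  x \in [set rcomb B d | d : {ffun 'I_2 -> R}] -> fv l x = 0.
Proof.
move=> injB hv hw g fv0 fw0 xL.
set S := [set rcomb (pr2 (tovec v) (tovec w)) c | c : {ffun 'I_2 -> R}].
have sub : S \subset [set rcomb B d | d : {ffun 'I_2 -> R}].
  by apply/subsetP => y /imsetP [c _ ->]; exact: comb_in.
have cS : #|S| = #|[set rcomb B d | d : {ffun 'I_2 -> R}]|.
  by rewrite !card_span //; exact: good_inj.
have eqSL := subset_cardP cS sub.
move: xL; rewrite -eqSL => /imsetP [c _ ->].
by rewrite fv_comb fv0 fw0 !mul0r addr0.
Qed.


Lemma crd_vmul (w : V R) c j : crd (vmul mulf w c) j = crd w j * c.
Proof. by case: j => [[|[|[|m]]] hm]; rewrite /crd /= mulfE. Qed.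

Lemma tovec_inj (v w : V R) : tovec v = tovec w -> v = w.
Proof.
move=> e; have e0 := congr1 (fun M : 'rV[R]_3 => M 0 o0) e.
have e1 := congr1 (fun M : 'rV[R]_3 => M 0 o1) e.
have e2 := congr1 (fun M : 'rV[R]_3 => M 0 o2) e.
move: e0 e1 e2; rewrite !tovecE; clear e.
by case: v => [[a b] c]; case: w => [[a2 b2] c2]; rewrite /crd /= => -> -> ->.
Qed.

Lemma eqV_eq (v w : V R) : eqV eqf v w -> v = w.
Proof.
rewrite /eqV !eqfE; case: v => [[a b] c]; case: w => [[a' b'] c'] /=.
by case/and3P => /eqP -> /eqP -> /eqP ->.
Qed.

Lemma eqV_refl (v : V R) : eqV eqf v v.
Proof. by rewrite /eqV !eqfE !eqxx. Qed.

Lemma normdP (v : V R) : normd eqf one v -> exists j, crd v j = 1.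
Proof.
by rewrite /normd !eqfE oneE => /or3P [] /eqP h; [exists o0 | exists o1 | exists o2].
Qed.

Lemma ptE (v : V R) c j : rcomb (fun _ : 'I_1 => tovec v) c 0 j = crd v j * c ord0.
Proof. by rewrite rcombE big_ord1 tovecE. Qed.

Lemma tovec_in_pt (v : V R) : tovec v \in pt v.
Proof.
apply/imsetP; exists [ffun _ => 1] => //.
by apply/rowP => j; rewrite ptE ffunE mulr1 tovecE.
Qed.

Lemma pt_point (v : V R) : normd eqf one v -> phg_point (pt v).
Proof.
case/normdP => j hj; exists (fun _ => tovec v); split => // c d e.
have := congr1 (fun M : 'rV[R]_3 => M 0 j) e; rewrite !ptE hj !mul1r => e0.
by apply/ffunP => i; rewrite (ord1_cases i).
Qed.

Lemma pt_eq (v w : V R) : pt v = pt w ->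
  (if good isu mulf subf eqf one v w then true
   else eqV eqf v w || all (fun c => ~~ eqV eqf (vmul mulf w c) v) els) -> v = w.
Proof.
move=> e; have := tovec_in_pt v; rewrite e => /imsetP [c _ ec].
have hv j : crd v j = crd w j * c ord0 by rewrite -(tovecE v) ec ptE.
case: ifP => g.
  have [h _] : (1 : R) = 0 /\ - c ord0 = 0.
    by apply: (good_scalar g) => j; rewrite mulr1 mulrN hv subrr.
  by move/eqP: h; rewrite oner_eq0.
case/orP; first exact: eqV_eq.
move/allP => /(_ (c ord0) (els_all _)).
have -> : vmul mulf w (c ord0) = v.
  by apply: tovec_inj; apply/rowP => j; rewrite !tovecE crd_vmul hv.
by rewrite eqV_refl.
Qed.


Lemma count_split_le (T : eqType) (a b : pred T) (s : seq T) :
  (count a s <= count (predI a b) s + count (predC b) s)%N.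
Proof.
elim: s => //= x s IH; case: (a x); case: (b x) => /=; rewrite ?add0n ?add1n ?addSn ?addnS //.
exact: leqW.
Qed.

Lemma arc_of_checks reps lns :
  allchecks els isu addf mulf subf eqf zero one reps lns ->
  exists A : {set {set 'rV[R]_3}}, proj_arc 201 13 A.
Proof.
case/and5P => hs hu hn hunit /and3P [hK4 hK5 hK6].
exists [set pt v | v in reps]; split.
- by move=> P /imsetP [v vin ->]; apply: pt_point; exact: (allP hn).
- rewrite card_in_imset; first by move/card_uniqP: hu => ->; apply/eqP.
  move=> v w vin win e; apply: (pt_eq e).
  by move: (allP hK5 v vin) => /= /allP /(_ w win); case: ifP.
move=> L [B [eL injB]]; subst L.
set L := [set rcomb B d | d : {ffun 'I_2 -> R}].
pose Q := fun v : V R => tovec v \in L.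
have sub : [set P in [set pt v | v in reps] | P \subset L] \subset (@pt R) @: [set v | (v \in reps) && Q v].
  apply/subsetP => P; rewrite inE => /andP [/imsetP [v vin ->] sub].
  apply/imsetP; exists v => //; rewrite inE vin /=; exact: (subsetP sub _ (tovec_in_pt v)).
apply: (leq_trans (subset_leq_card sub)).
apply: (leq_trans (leq_imset_card _ _)).
have -> : #|[set v | (v \in reps) && Q v]| = count Q reps.
  rewrite -size_filter; move/card_uniqP: (filter_uniq Q hu) => <-.
  by apply: eq_card => v; rewrite inE mem_filter andbC.
case: (boolP (has Q reps)) => [/hasP [v0 v0in Qv0] | nh]; last first.
  by rewrite has_count -leqNgt in nh; exact: (leq_trans nh).
pose G := good isu mulf subf eqf one v0.
case: (boolP (has (predI Q G) reps)) => [/hasP [w win /andP [Qw Gw]] | nh2]; last first.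
  apply: (leq_trans (count_split_le Q G reps)).
  by move: nh2; rewrite has_count -leqNgt leqn0 => /eqP ->; rewrite add0n; exact: (allP hK4 v0 v0in).
move: (allP hK5 v0 v0in) => /= /allP /(_ w win); rewrite (Gw : good isu mulf subf eqf one v0 w) => /hasP [l].
rewrite mem_filter => /andP [hlv0 lin] hlw.
have fz : forall u, Q u -> eqf (fval addf mulf l u) zero.
  move=> u Qu; rewrite eqfE zeroE fvalE; apply/eqP.
  apply: (line_ker injB Qv0 Qw Gw _ _ Qu) => //.
    by move: hlv0; rewrite eqfE zeroE fvalE => /eqP.
  by move: hlw; rewrite eqfE zeroE fvalE => /eqP.
apply: (@leq_trans (count (fun u => eqf (fval addf mulf l u) zero) reps)).
  by apply: sub_count => u; exact: fz.
exact: (allP hK6 l lin).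
Qed.

End Proofs.


Lemma all_els2 (T : eqType) (els : seq T) (P : T -> T -> bool) :
  (forall x, x \in els) -> all (fun x => all (P x) els) els -> forall x y, P x y.
Proof. by move=> h /allP a x y; move/allP: (a x (h x)) => /(_ y (h y)). Qed.

Definition f4n (k : nat) : F4 := MkF4 (odd k, odd k./2).
Definition codeF (x : F4) : nat := let: MkF4 (a, b) := x in (a + b.*2)%N.

Definition decS (n : nat) : S4 := MkS4 (f4n (n %% 4), f4n (n %/ 4)).
Definition dec3S (t : nat * nat * nat) : V S4 := (decS t.1.1, decS t.1.2, decS t.2).
Definition els_S : seq S4 := map decS (iota 0 16).
Definition addS (x y : S4) : S4 := let: MkS4 (a, b) := x in let: MkS4 (c, d) := y in
  MkS4 (f4add a c, f4add b d).
Definition mulS (x y : S4) : S4 := let: MkS4 (a, b) := x in let: MkS4 (c, d) := y in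
  MkS4 (f4mul a c, f4add (f4mul a d) (f4mul b c)).
Definition eqS (x y : S4) : bool := let: MkS4 (a, b) := x in let: MkS4 (c, d) := y in
  (codeF a == codeF c) && (codeF b == codeF d).
Definition isuS (x : S4) : bool := let: MkS4 (a, _) := x in codeF a != 0%N.
Definition zS : S4 := 0. Definition oS : S4 := 1.

Lemma els_S_all (x : S4) : x \in els_S.
Proof. by case: x => [[[[[] []]] [[[] []]]]]. Qed.
Lemma addS_ok : forall x y, addS x y = x + y.
Proof. move=> x y; apply/eqP; move: x y; apply: (all_els2 els_S_all); by vm_compute. Qed.
Lemma mulS_ok : forall x y, mulS x y = x * y.
Proof. move=> x y; apply/eqP; move: x y; apply: (all_els2 els_S_all); by vm_compute. Qed.
Lemma subS_ok : forall x y, addS x y = x - y.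
Proof. move=> x y; apply/eqP; move: x y; apply: (all_els2 els_S_all); by vm_compute. Qed.
Lemma eqS_ok : forall x y, eqS x y = (x == y).
Proof. move=> x y; apply/eqP; move: x y; apply: (all_els2 (P := fun x y => eqS x y == (x == y)) els_S_all); by vm_compute. Qed.
Lemma unitS : all (fun x => ~~ isuS x || has (fun y => eqS (mulS y x) oS) els_S) els_S.
Proof. by vm_compute. Qed.
Definition reps_S_n : seq (nat*nat*nat) := [:: (0,0,1); (8,1,11); (1,14,11); (1,7,13); (1,8,13); (0,4,1); (0,1,7); (1,2,15); (1,11,13); (1,8,1); (0,12,1); (12,1,3); (1,6,7); (1,15,13); (1,8,5); (0,1,0); (1,8,2); (8,1,14); (1,13,5); (1,12,4); (0,1,8); (1,12,14); (4,1,14); (1,5,5); (1,12,8); (0,1,12); (1,0,6); (12,1,14); (1,1,5); (1,12,0); (0,1,1); (1,7,4); (1,13,2); (1,14,9); (1,0,11); (0,1,9); (1,3,8); (1,9,10); (1,2,9); (1,0,3); (0,1,2); (1,1,1); (1,0,8); (4,1,0); (1,4,2); (0,1,6); (1,13,9); (1,4,0); (12,1,8); (1,4,14); (0,1,10); (1,5,13); (1,8,4); (8,1,12); (1,4,6); (4,0,1); (8,1,7); (1,6,15); (1,3,5); (1,0,13); (4,8,1); (4,1,3); (1,2,7); (1,7,5); (1,0,9); (4,1,12); (1,12,6); (4,1,2); (1,13,1); (1,0,12); (4,1,1); (1,11,4); (1,9,2); (1,6,5); (1,4,3); (4,1,5); (1,7,12); (1,5,6); (1,14,5); (1,4,7);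 (4,1,13); (1,3,0); (1,1,14); (1,2,5); (1,4,15); (4,1,7); (1,14,15); (1,15,9); (1,12,9); (12,8,1); (4,1,11); (1,6,11); (1,11,1); (1,4,9); (8,8,1); (8,12,1); (12,1,7); (1,10,15); (1,7,1); (1,4,5); (8,1,4); (1,0,10); (12,1,10); (1,13,13); (1,8,8); (8,1,8); (1,8,14); (8,1,10); (1,1,13); (1,8,12); (8,1,1); (1,3,4); (1,5,2); (1,2,13); (1,8,7); (8,1,5); (1,15,12); (1,9,6); (1,10,13); (1,8,3); (8,1,3); (1,10,7); (1,11,9); (1,12,13); (12,0,1); (12,12,1); (12,1,11); (1,2,11); (1,3,9); (1,12,5); (12,1,0); (1,0,2); (12,1,6); (1,5,9); (1,4,12); (12,1,9); (1,11,8); (1,5,10); (1,6,1); (1,12,7); (12,1,13); (1,7,0); (1,9,14); (1,14,1); (1,12,3); (1,1,3); (1,1,7); (1,13,11); (1,9,3); (1,9,11); (1,13,7); (1,5,4); (1,11,2); (1,11,3); (1,2,4); (1,10,2); (1,5,8); (1,3,6); (1,7,3); (1,10,12); (1,14,10); (1,5,12); (1,15,14); (1,3,3); (1,6,0); (1,6,6); (1,9,0); (1,15,10); (1,7,15); (1,6,4); (1,14,2); (1,9,4); (1,3,2); (1,3,15); (1,10,8); (1,6,14); (1,9,8); (1,11,6); (1,15,15); (1,2,0); (1,2,6); (1,9,12); (1,7,14); (1,11,15); (1,14,12); (1,10,10); (1,13,0); (1,3,10); (1,11,11); (1,10,0); (1,10,6); (1,13,8); (1,7,6); (1,3,11); (1,14,4);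 (1,6,2); (1,13,12); (1,11,14); (1,7,11); (1,2,8); (1,14,14)].
Definition lns_S_n : seq (nat*nat*nat) := [:: (0,0,1); (0,4,1); (0,8,1); (0,12,1); (0,1,0); (0,1,4); (0,1,8); (0,1,12); (0,1,1); (0,1,5); (0,1,9); (0,1,13); (0,1,2); (0,1,6); (0,1,10); (0,1,14); (0,1,3); (0,1,7); (0,1,11); (0,1,15); (4,0,1); (4,4,1); (4,8,1); (4,12,1); (4,1,0); (4,1,4); (4,1,8); (4,1,12); (4,1,1); (4,1,5); (4,1,9); (4,1,13); (4,1,2); (4,1,6); (4,1,10); (4,1,14); (4,1,3); (4,1,7); (4,1,11); (4,1,15); (8,0,1); (8,4,1); (8,8,1); (8,12,1); (8,1,0); (8,1,4); (8,1,8); (8,1,12); (8,1,1); (8,1,5); (8,1,9); (8,1,13); (8,1,2); (8,1,6); (8,1,10); (8,1,14); (8,1,3); (8,1,7); (8,1,11); (8,1,15); (12,0,1); (12,4,1); (12,8,1); (12,12,1); (12,1,0); (12,1,4); (12,1,8); (12,1,12); (12,1,1); (12,1,5); (12,1,9); (12,1,13); (12,1,2); (12,1,6); (12,1,10); (12,1,14); (12,1,3); (12,1,7); (12,1,11); (12,1,15); (1,0,0); (1,0,4); (1,0,8); (1,0,12); (1,0,1); (1,0,5); (1,0,9); (1,0,13); (1,0,2); (1,0,6); (1,0,10); (1,0,14); (1,0,3); (1,0,7); (1,0,11); (1,0,15); (1,4,0); (1,4,4); (1,4,8); (1,4,12); (1,4,1); (1,4,5); (1,4,9); (1,4,13); (1,4,2);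 (1,4,6); (1,4,10); (1,4,14); (1,4,3); (1,4,7); (1,4,11); (1,4,15); (1,8,0); (1,8,4); (1,8,8); (1,8,12); (1,8,1); (1,8,5); (1,8,9); (1,8,13); (1,8,2); (1,8,6); (1,8,10); (1,8,14); (1,8,3); (1,8,7); (1,8,11); (1,8,15); (1,12,0); (1,12,4); (1,12,8); (1,12,12); (1,12,1); (1,12,5); (1,12,9); (1,12,13); (1,12,2); (1,12,6); (1,12,10); (1,12,14); (1,12,3); (1,12,7); (1,12,11); (1,12,15); (1,1,0); (1,1,4); (1,1,8); (1,1,12); (1,1,1); (1,1,5); (1,1,9); (1,1,13); (1,1,2); (1,1,6); (1,1,10); (1,1,14); (1,1,3); (1,1,7); (1,1,11); (1,1,15); (1,5,0); (1,5,4); (1,5,8); (1,5,12); (1,5,1); (1,5,5); (1,5,9); (1,5,13); (1,5,2); (1,5,6); (1,5,10); (1,5,14); (1,5,3); (1,5,7); (1,5,11); (1,5,15); (1,9,0); (1,9,4); (1,9,8); (1,9,12); (1,9,1); (1,9,5); (1,9,9); (1,9,13); (1,9,2); (1,9,6); (1,9,10); (1,9,14); (1,9,3); (1,9,7); (1,9,11); (1,9,15); (1,13,0); (1,13,4); (1,13,8); (1,13,12); (1,13,1); (1,13,5); (1,13,9); (1,13,13); (1,13,2); (1,13,6); (1,13,10); (1,13,14); (1,13,3); (1,13,7); (1,13,11); (1,13,15); (1,2,0); (1,2,4); (1,2,8); (1,2,12); (1,2,1); (1,2,5); (1,2,9); (1,2,13); (1,2,2); (1,2,6); (1,2,10); (1,2,14);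 (1,2,3); (1,2,7); (1,2,11); (1,2,15); (1,6,0); (1,6,4); (1,6,8); (1,6,12); (1,6,1); (1,6,5); (1,6,9); (1,6,13); (1,6,2); (1,6,6); (1,6,10); (1,6,14); (1,6,3); (1,6,7); (1,6,11); (1,6,15); (1,10,0); (1,10,4); (1,10,8); (1,10,12); (1,10,1); (1,10,5); (1,10,9); (1,10,13); (1,10,2); (1,10,6); (1,10,10); (1,10,14); (1,10,3); (1,10,7); (1,10,11); (1,10,15); (1,14,0); (1,14,4); (1,14,8); (1,14,12); (1,14,1); (1,14,5); (1,14,9); (1,14,13); (1,14,2); (1,14,6); (1,14,10); (1,14,14); (1,14,3); (1,14,7); (1,14,11); (1,14,15); (1,3,0); (1,3,4); (1,3,8); (1,3,12); (1,3,1); (1,3,5); (1,3,9); (1,3,13); (1,3,2); (1,3,6); (1,3,10); (1,3,14); (1,3,3); (1,3,7); (1,3,11); (1,3,15); (1,7,0); (1,7,4); (1,7,8); (1,7,12); (1,7,1); (1,7,5); (1,7,9); (1,7,13); (1,7,2); (1,7,6); (1,7,10); (1,7,14); (1,7,3); (1,7,7); (1,7,11); (1,7,15); (1,11,0); (1,11,4); (1,11,8); (1,11,12); (1,11,1); (1,11,5); (1,11,9); (1,11,13); (1,11,2); (1,11,6); (1,11,10); (1,11,14); (1,11,3); (1,11,7); (1,11,11); (1,11,15); (1,15,0); (1,15,4); (1,15,8); (1,15,12); (1,15,1); (1,15,5); (1,15,9); (1,15,13); (1,15,2); (1,15,6); (1,15,10); (1,15,14); (1,15,3); (1,15,7); (1,15,11);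 (1,15,15)].
Definition reps_S := map dec3S reps_S_n.
Definition lns_S := map dec3S lns_S_n.
Lemma checks_S : allchecks els_S isuS addS mulS addS eqS zS oS reps_S lns_S.
Proof. vm_compute. reflexivity. Qed.
Lemma arc_S : exists A : {set {set 'rV[S4]_3}}, proj_arc 201 13 A.
Proof. exact: (arc_of_checks els_S_all addS_ok mulS_ok subS_ok eqS_ok erefl erefl unitS checks_S). Qed.
Definition decT (n : nat) : T4 := MkT4 (f4n (n %% 4), f4n (n %/ 4)).
Definition dec3T (t : nat * nat * nat) : V T4 := (decT t.1.1, decT t.1.2, decT t.2).
Definition els_T : seq T4 := map decT (iota 0 16).
Definition addT (x y : T4) : T4 := let: MkT4 (a, b) := x in let: MkT4 (c, d) := y in
  MkT4 (f4add a c, f4add b d).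
Definition mulT (x y : T4) : T4 := let: MkT4 (a, b) := x in let: MkT4 (c, d) := y in
  MkT4 (f4mul a c, f4add (f4mul a d) (f4mul b (f4mul c c))).
Definition eqT (x y : T4) : bool := let: MkT4 (a, b) := x in let: MkT4 (c, d) := y in
  (codeF a == codeF c) && (codeF b == codeF d).
Definition isuT (x : T4) : bool := let: MkT4 (a, _) := x in codeF a != 0%N.
Definition zT : T4 := 0. Definition oT : T4 := 1.

Lemma els_T_all (x : T4) : x \in els_T.
Proof. by case: x => [[[[[] []]] [[[] []]]]]. Qed.
Lemma addT_ok : forall x y, addT x y = x + y.
Proof. move=> x y; apply/eqP; move: x y; apply: (all_els2 els_T_all); by vm_compute. Qed.
Lemma mulT_ok : forall x y, mulT x y = x * y.
Proof. move=> x y; apply/eqP; move: x y; apply: (all_els2 els_T_all); by vm_compute. Qed.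
Lemma subT_ok : forall x y, addT x y = x - y.
Proof. move=> x y; apply/eqP; move: x y; apply: (all_els2 els_T_all); by vm_compute. Qed.
Lemma eqT_ok : forall x y, eqT x y = (x == y).
Proof. move=> x y; apply/eqP; move: x y; apply: (all_els2 (P := fun x y => eqT x y == (x == y)) els_T_all); by vm_compute. Qed.
Lemma unitT : all (fun x => ~~ isuT x || has (fun y => eqT (mulT y x) oT) els_T) els_T.
Proof. by vm_compute. Qed.
Definition reps_T_n : seq (nat*nat*nat) := [:: (0,8,1); (1,10,5); (1,8,12); (1,13,12); (1,3,5); (0,12,1); (1,6,9); (1,0,4); (1,5,4); (1,15,9); (0,1,4); (1,0,3); (1,3,3); (1,6,11); (1,13,11); (0,1,1); (0,1,5); (12,1,13); (4,1,13); (12,1,5); (0,1,2); (1,13,10); (1,1,9); (1,8,1); (1,8,14); (0,1,10); (1,9,14); (1,13,5); (1,4,13); (1,12,10); (0,1,6); (1,1,6); (1,9,1); (1,0,9); (1,4,2); (0,1,14); (1,5,2); (1,5,13); (1,12,5); (1,0,6); (0,1,3); (1,15,4); (1,2,14); (1,3,6); (1,2,4); (0,1,15); (1,7,12); (1,6,10); (1,7,2); (1,10,12); (0,1,7); (1,3,8); (1,10,6); (1,11,14); (1,14,8); (0,1,11); (1,11,0); (1,14,2); (1,15,10); (1,6,0); (4,0,1); (1,6,13); (1,12,12); (1,1,4); (1,3,1); (4,4,1); (1,10,1); (1,4,4); (1,9,12); (1,15,13); (4,8,1); (1,2,9); (1,0,0); (1,13,8); (1,7,5); (4,12,1); (1,14,5);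 (1,8,8); (1,5,0); (1,11,9); (4,1,8); (1,4,3); (1,7,3); (1,2,11); (1,9,11); (4,1,12); (1,8,15); (1,15,11); (1,10,3); (1,5,7); (4,1,1); (4,1,3); (1,7,4); (1,6,2); (1,3,14); (1,2,12); (4,1,15); (1,15,12); (1,2,6); (1,7,10); (1,10,4); (8,1,0); (1,8,3); (1,11,3); (1,14,11); (1,5,11); (8,1,8); (1,12,7); (1,7,15); (1,2,7); (1,1,15); (8,1,12); (1,0,11); (1,15,7); (1,10,15); (1,13,3); (8,1,2); (1,13,14); (1,5,9); (1,8,5); (1,0,2); (8,1,10); (1,9,10); (1,9,5); (1,4,9); (1,4,6); (8,1,6); (1,1,2); (1,13,1); (1,0,13); (1,12,14); (8,1,14); (1,5,6); (1,1,13); (1,12,1); (1,8,10); (8,1,3); (1,3,4); (1,10,10); (1,3,10); (1,2,8); (8,1,15); (1,11,12); (1,14,14); (1,7,14); (1,10,0); (8,1,7); (1,15,8); (1,2,2); (1,11,2); (1,14,4); (8,1,11); (1,7,0); (1,6,6); (1,15,6); (1,6,12); (12,0,1); (1,10,9); (1,0,8); (1,1,12); (1,11,1); (12,4,1); (1,6,5); (1,8,0); (1,9,4); (1,7,13); (12,8,1); (1,14,13); (1,12,4); (1,13,0); (1,15,5); (12,12,1); (1,2,1); (1,4,12); (1,5,8); (1,3,9); (12,1,4); (1,8,7); (1,3,15); (1,6,7); (1,5,15); (12,1,8); (1,0,15); (1,7,11); (1,2,3); (1,13,7); (12,1,12); (1,12,3); (1,15,3); (1,10,11); (1,1,11); (12,1,6);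 (1,1,14); (1,1,1); (1,0,1); (1,8,6); (12,1,14); (1,5,10); (1,13,13); (1,12,13); (1,12,2)].
Definition lns_T_n : seq (nat*nat*nat) := [:: (0,0,1); (0,4,1); (0,8,1); (0,12,1); (0,1,0); (0,1,4); (0,1,8); (0,1,12); (0,1,1); (0,1,5); (0,1,9); (0,1,13); (0,1,2); (0,1,6); (0,1,10); (0,1,14); (0,1,3); (0,1,7); (0,1,11); (0,1,15); (4,0,1); (4,4,1); (4,8,1); (4,12,1); (4,1,0); (4,1,4); (4,1,8); (4,1,12); (4,1,1); (4,1,5); (4,1,9); (4,1,13); (4,1,2); (4,1,6); (4,1,10); (4,1,14); (4,1,3); (4,1,7); (4,1,11); (4,1,15); (8,0,1); (8,4,1); (8,8,1); (8,12,1); (8,1,0); (8,1,4); (8,1,8); (8,1,12); (8,1,1); (8,1,5); (8,1,9); (8,1,13); (8,1,2); (8,1,6); (8,1,10); (8,1,14); (8,1,3); (8,1,7); (8,1,11); (8,1,15); (12,0,1); (12,4,1); (12,8,1); (12,12,1); (12,1,0); (12,1,4); (12,1,8); (12,1,12); (12,1,1); (12,1,5); (12,1,9); (12,1,13); (12,1,2); (12,1,6); (12,1,10); (12,1,14); (12,1,3); (12,1,7); (12,1,11); (12,1,15); (1,0,0); (1,0,4); (1,0,8); (1,0,12); (1,0,1); (1,0,5); (1,0,9); (1,0,13); (1,0,2); (1,0,6); (1,0,10); (1,0,14); (1,0,3); (1,0,7); (1,0,11); (1,0,15); (1,4,0); (1,4,4); (1,4,8); (1,4,12); (1,4,1); (1,4,5);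 (1,4,9); (1,4,13); (1,4,2); (1,4,6); (1,4,10); (1,4,14); (1,4,3); (1,4,7); (1,4,11); (1,4,15); (1,8,0); (1,8,4); (1,8,8); (1,8,12); (1,8,1); (1,8,5); (1,8,9); (1,8,13); (1,8,2); (1,8,6); (1,8,10); (1,8,14); (1,8,3); (1,8,7); (1,8,11); (1,8,15); (1,12,0); (1,12,4); (1,12,8); (1,12,12); (1,12,1); (1,12,5); (1,12,9); (1,12,13); (1,12,2); (1,12,6); (1,12,10); (1,12,14); (1,12,3); (1,12,7); (1,12,11); (1,12,15); (1,1,0); (1,1,4); (1,1,8); (1,1,12); (1,1,1); (1,1,5); (1,1,9); (1,1,13); (1,1,2); (1,1,6); (1,1,10); (1,1,14); (1,1,3); (1,1,7); (1,1,11); (1,1,15); (1,5,0); (1,5,4); (1,5,8); (1,5,12); (1,5,1); (1,5,5); (1,5,9); (1,5,13); (1,5,2); (1,5,6); (1,5,10); (1,5,14); (1,5,3); (1,5,7); (1,5,11); (1,5,15); (1,9,0); (1,9,4); (1,9,8); (1,9,12); (1,9,1); (1,9,5); (1,9,9); (1,9,13); (1,9,2); (1,9,6); (1,9,10); (1,9,14); (1,9,3); (1,9,7); (1,9,11); (1,9,15); (1,13,0); (1,13,4); (1,13,8); (1,13,12); (1,13,1); (1,13,5); (1,13,9); (1,13,13); (1,13,2); (1,13,6); (1,13,10); (1,13,14); (1,13,3); (1,13,7); (1,13,11); (1,13,15); (1,2,0); (1,2,4); (1,2,8); (1,2,12); (1,2,1); (1,2,5); (1,2,9); (1,2,13); (1,2,2);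 (1,2,6); (1,2,10); (1,2,14); (1,2,3); (1,2,7); (1,2,11); (1,2,15); (1,6,0); (1,6,4); (1,6,8); (1,6,12); (1,6,1); (1,6,5); (1,6,9); (1,6,13); (1,6,2); (1,6,6); (1,6,10); (1,6,14); (1,6,3); (1,6,7); (1,6,11); (1,6,15); (1,10,0); (1,10,4); (1,10,8); (1,10,12); (1,10,1); (1,10,5); (1,10,9); (1,10,13); (1,10,2); (1,10,6); (1,10,10); (1,10,14); (1,10,3); (1,10,7); (1,10,11); (1,10,15); (1,14,0); (1,14,4); (1,14,8); (1,14,12); (1,14,1); (1,14,5); (1,14,9); (1,14,13); (1,14,2); (1,14,6); (1,14,10); (1,14,14); (1,14,3); (1,14,7); (1,14,11); (1,14,15); (1,3,0); (1,3,4); (1,3,8); (1,3,12); (1,3,1); (1,3,5); (1,3,9); (1,3,13); (1,3,2); (1,3,6); (1,3,10); (1,3,14); (1,3,3); (1,3,7); (1,3,11); (1,3,15); (1,7,0); (1,7,4); (1,7,8); (1,7,12); (1,7,1); (1,7,5); (1,7,9); (1,7,13); (1,7,2); (1,7,6); (1,7,10); (1,7,14); (1,7,3); (1,7,7); (1,7,11); (1,7,15); (1,11,0); (1,11,4); (1,11,8); (1,11,12); (1,11,1); (1,11,5); (1,11,9); (1,11,13); (1,11,2); (1,11,6); (1,11,10); (1,11,14); (1,11,3); (1,11,7); (1,11,11); (1,11,15); (1,15,0); (1,15,4); (1,15,8); (1,15,12); (1,15,1); (1,15,5); (1,15,9); (1,15,13); (1,15,2); (1,15,6); (1,15,10); (1,15,14);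 (1,15,3); (1,15,7); (1,15,11); (1,15,15)].
Definition reps_T := map dec3T reps_T_n.
Definition lns_T := map dec3T lns_T_n.
Lemma checks_T : allchecks els_T isuT addT mulT addT eqT zT oT reps_T lns_T.
Proof. vm_compute. reflexivity. Qed.
Lemma arc_T : exists A : {set {set 'rV[T4]_3}}, proj_arc 201 13 A.
Proof. exact: (arc_of_checks els_T_all addT_ok mulT_ok subT_ok eqT_ok erefl erefl unitT checks_T). Qed.
Definition z4 (n : nat) : 'Z_4 := @inZp 3 n.
Definition decG (n : nat) : G4 := MkG4 (z4 (n %% 4), z4 (n %/ 4)).
Definition dec3G (t : nat * nat * nat) : V G4 := (decG t.1.1, decG t.1.2, decG t.2).
Definition els_G : seq G4 := map decG (iota 0 16).
Definition addG (x y : G4) : G4 := let: MkG4 (a, b) := x in let: MkG4 (c, d) := y in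
  MkG4 (z4 (a + c), z4 (b + d)).
Definition subG (x y : G4) : G4 := let: MkG4 (a, b) := x in let: MkG4 (c, d) := y in
  MkG4 (z4 (a + 3 * c), z4 (b + 3 * d)).
Definition mulG (x y : G4) : G4 := let: MkG4 (a, b) := x in let: MkG4 (c, d) := y in
  MkG4 (z4 (a * c + 3 * (b * d)), z4 (a * d + b * c + 3 * (b * d))).
Definition eqG (x y : G4) : bool := let: MkG4 (a, b) := x in let: MkG4 (c, d) := y in
  (nat_of_ord a == nat_of_ord c) && (nat_of_ord b == nat_of_ord d).
Definition isuG (x : G4) : bool := let: MkG4 (a, b) := x in odd a || odd b.
Definition zG : G4 := 0. Definition oG : G4 := 1.

Lemma els_G_all (x : G4) : x \in els_G.
Proof.
case: x => [[a b]]; case: a => [[|[|[|[|m]]]] ha] //; case: b => [[|[|[|[|n]]]] hb] //;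
  by vm_compute.
Qed.
Lemma addG_ok : forall x y, addG x y = x + y.
Proof. move=> x y; apply/eqP; move: x y; apply: (all_els2 els_G_all); by vm_compute. Qed.
Lemma mulG_ok : forall x y, mulG x y = x * y.
Proof. move=> x y; apply/eqP; move: x y; apply: (all_els2 els_G_all); by vm_compute. Qed.
Lemma subG_ok : forall x y, subG x y = x - y.
Proof. move=> x y; apply/eqP; move: x y; apply: (all_els2 els_G_all); by vm_compute. Qed.
Lemma eqG_ok : forall x y, eqG x y = (x == y).
Proof. move=> x y; apply/eqP; move: x y; apply: (all_els2 (P := fun x y => eqG x y == (x == y)) els_G_all); by vm_compute. Qed.
Lemma unitG : all (fun x => ~~ isuG x || has (fun y => eqG (mulG y x) oG) els_G) els_G.
Proof. by vm_compute. Qed.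
Definition reps_G_n : seq (nat*nat*nat) := [:: (0,1,4); (1,11,10); (1,6,12); (10,1,1); (1,4,0); (1,11,6); (0,1,8); (0,1,12); (1,3,10); (1,4,12); (10,1,3); (1,6,0); (1,3,6); (0,1,5); (1,0,2); (1,0,6); (8,1,15); (1,10,10); (1,0,14); (0,1,9); (1,6,8); (1,11,14); (2,1,6); (1,3,2); (1,6,4); (0,1,13); (1,2,2); (1,8,6); (8,1,13); (1,2,10); (1,2,14); (0,1,6); (1,1,10); (1,12,12); (10,1,9); (1,14,0); (1,1,6); (0,1,3); (1,14,8); (1,9,14); (2,1,12); (1,1,2); (1,14,4); (0,1,11); (1,4,8); (1,3,14); (2,1,14); (1,11,2); (1,4,4); (0,1,15); (1,10,2); (1,10,6); (8,1,5); (1,0,10); (1,10,14); (0,2,1); (1,5,0); (1,15,4); (10,2,1); (1,15,8); (1,5,12); (0,10,1); (1,15,0); (1,5,4); (10,10,1); (1,5,8); (1,15,12); (8,0,1); (1,5,10); (1,15,6); (8,8,1); (1,15,10); (1,5,6); (8,1,0); (2,1,2); (2,1,10); (8,1,10); (10,1,2); (10,1,0); (8,1,4); (1,1,8); (1,4,6); (2,1,1); (1,14,10); (1,3,4); (8,1,1); (1,6,2); (1,9,12); (10,1,4); (1,3,0); (1,14,14); (8,1,6); (1,11,8); (1,14,6); (2,1,9); (1,4,10); (1,9,4); (8,1,14); (1,3,8); (1,12,6); (2,1,11); (1,6,10); (1,1,4); (8,1,3); (1,4,2); (1,1,12); (10,1,12); (1,11,0); (1,12,14); (8,1,11); (1,14,2);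 (1,11,12); (10,1,14); (1,1,0); (1,6,14); (1,0,0); (1,2,12); (10,1,15); (1,10,0); (1,8,12); (10,1,5); (1,0,4); (2,1,13); (1,2,8); (1,0,8); (1,8,4); (2,1,15); (1,10,8); (1,2,4); (2,1,5); (1,0,1); (1,4,5); (1,6,9); (1,8,7); (1,9,1); (1,9,5); (1,0,13); (1,9,9); (1,3,7); (1,2,3); (1,4,13); (1,12,3); (1,0,3); (1,14,13); (1,4,3); (1,8,13); (1,3,9); (1,1,7); (1,0,7); (1,3,1); (1,11,5); (1,2,1); (1,14,5); (1,14,9); (1,4,9); (1,2,7); (1,1,1); (1,1,5); (1,10,1); (1,6,5); (1,8,1); (1,12,5); (1,12,9); (1,10,7); (1,11,1); (1,3,5); (1,8,3); (1,6,13); (1,14,3); (1,10,13); (1,1,9); (1,11,7); (1,12,13); (1,6,3); (1,2,13); (1,11,9); (1,9,7); (1,10,3); (1,5,9); (1,13,7); (1,15,9); (1,15,7); (1,13,9); (1,5,7); (1,5,2); (1,15,14); (2,0,1); (1,15,2); (1,5,14); (2,8,1); (1,2,0); (1,10,12); (10,1,13); (1,7,1); (1,7,5); (1,7,11); (1,7,15); (1,7,3); (1,7,13); (1,7,9); (1,7,7)].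
Definition lns_G_n : seq (nat*nat*nat) := [:: (0,0,1); (0,8,1); (0,1,0); (0,1,4); (0,1,8); (0,1,12); (0,1,1); (0,1,5); (0,1,9); (0,1,13); (0,1,2); (0,1,6); (0,1,10); (0,1,14); (0,1,3); (0,1,7); (0,1,11); (0,1,15); (0,2,1); (0,10,1); (8,0,1); (8,8,1); (8,1,0); (8,1,4); (8,1,8); (8,1,12); (8,1,1); (8,1,5); (8,1,9); (8,1,13); (8,1,2); (8,1,6); (8,1,10); (8,1,14); (8,1,3); (8,1,7); (8,1,11); (8,1,15); (8,2,1); (8,10,1); (1,0,0); (1,0,4); (1,0,8); (1,0,12); (1,0,1); (1,0,5); (1,0,9); (1,0,13); (1,0,2); (1,0,6); (1,0,10); (1,0,14); (1,0,3); (1,0,7); (1,0,11); (1,0,15); (1,4,0); (1,4,4); (1,4,8); (1,4,12); (1,4,1); (1,4,5); (1,4,9); (1,4,13); (1,4,2); (1,4,6); (1,4,10); (1,4,14); (1,4,3); (1,4,7); (1,4,11); (1,4,15); (1,8,0); (1,8,4); (1,8,8); (1,8,12); (1,8,1); (1,8,5); (1,8,9); (1,8,13); (1,8,2); (1,8,6); (1,8,10); (1,8,14); (1,8,3); (1,8,7); (1,8,11); (1,8,15); (1,12,0); (1,12,4); (1,12,8); (1,12,12); (1,12,1); (1,12,5); (1,12,9); (1,12,13); (1,12,2); (1,12,6); (1,12,10); (1,12,14); (1,12,3); (1,12,7); (1,12,11); (1,12,15); (1,1,0); (1,1,4); (1,1,8); (1,1,12); (1,1,1); (1,1,5); (1,1,9);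 (1,1,13); (1,1,2); (1,1,6); (1,1,10); (1,1,14); (1,1,3); (1,1,7); (1,1,11); (1,1,15); (1,5,0); (1,5,4); (1,5,8); (1,5,12); (1,5,1); (1,5,5); (1,5,9); (1,5,13); (1,5,2); (1,5,6); (1,5,10); (1,5,14); (1,5,3); (1,5,7); (1,5,11); (1,5,15); (1,9,0); (1,9,4); (1,9,8); (1,9,12); (1,9,1); (1,9,5); (1,9,9); (1,9,13); (1,9,2); (1,9,6); (1,9,10); (1,9,14); (1,9,3); (1,9,7); (1,9,11); (1,9,15); (1,13,0); (1,13,4); (1,13,8); (1,13,12); (1,13,1); (1,13,5); (1,13,9); (1,13,13); (1,13,2); (1,13,6); (1,13,10); (1,13,14); (1,13,3); (1,13,7); (1,13,11); (1,13,15); (1,2,0); (1,2,4); (1,2,8); (1,2,12); (1,2,1); (1,2,5); (1,2,9); (1,2,13); (1,2,2); (1,2,6); (1,2,10); (1,2,14); (1,2,3); (1,2,7); (1,2,11); (1,2,15); (1,6,0); (1,6,4); (1,6,8); (1,6,12); (1,6,1); (1,6,5); (1,6,9); (1,6,13); (1,6,2); (1,6,6); (1,6,10); (1,6,14); (1,6,3); (1,6,7); (1,6,11); (1,6,15); (1,10,0); (1,10,4); (1,10,8); (1,10,12); (1,10,1); (1,10,5); (1,10,9); (1,10,13); (1,10,2); (1,10,6); (1,10,10); (1,10,14); (1,10,3); (1,10,7); (1,10,11); (1,10,15); (1,14,0); (1,14,4); (1,14,8); (1,14,12); (1,14,1); (1,14,5); (1,14,9); (1,14,13); (1,14,2); (1,14,6);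 (1,14,10); (1,14,14); (1,14,3); (1,14,7); (1,14,11); (1,14,15); (1,3,0); (1,3,4); (1,3,8); (1,3,12); (1,3,1); (1,3,5); (1,3,9); (1,3,13); (1,3,2); (1,3,6); (1,3,10); (1,3,14); (1,3,3); (1,3,7); (1,3,11); (1,3,15); (1,7,0); (1,7,4); (1,7,8); (1,7,12); (1,7,1); (1,7,5); (1,7,9); (1,7,13); (1,7,2); (1,7,6); (1,7,10); (1,7,14); (1,7,3); (1,7,7); (1,7,11); (1,7,15); (1,11,0); (1,11,4); (1,11,8); (1,11,12); (1,11,1); (1,11,5); (1,11,9); (1,11,13); (1,11,2); (1,11,6); (1,11,10); (1,11,14); (1,11,3); (1,11,7); (1,11,11); (1,11,15); (1,15,0); (1,15,4); (1,15,8); (1,15,12); (1,15,1); (1,15,5); (1,15,9); (1,15,13); (1,15,2); (1,15,6); (1,15,10); (1,15,14); (1,15,3); (1,15,7); (1,15,11); (1,15,15); (2,0,1); (2,8,1); (2,1,0); (2,1,4); (2,1,8); (2,1,12); (2,1,1); (2,1,5); (2,1,9); (2,1,13); (2,1,2); (2,1,6); (2,1,10); (2,1,14); (2,1,3); (2,1,7); (2,1,11); (2,1,15); (2,2,1); (2,10,1); (10,0,1); (10,8,1); (10,1,0); (10,1,4); (10,1,8); (10,1,12); (10,1,1); (10,1,5); (10,1,9); (10,1,13); (10,1,2); (10,1,6); (10,1,10); (10,1,14); (10,1,3); (10,1,7); (10,1,11); (10,1,15); (10,2,1); (10,10,1)].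
Definition reps_G := map dec3G reps_G_n.
Definition lns_G := map dec3G lns_G_n.
Lemma checks_G : allchecks els_G isuG addG mulG subG eqG zG oG reps_G lns_G.
Proof. vm_compute. reflexivity. Qed.
Lemma arc_G : exists A : {set {set 'rV[G4]_3}}, proj_arc 201 13 A.
Proof. exact: (arc_of_checks els_G_all addG_ok mulG_ok subG_ok eqG_ok erefl erefl unitG checks_G). Qed.

Theorem theorem3p8 :
  (exists A : {set {set 'rV[G4]_3}}, proj_arc 201 13 A) /\
  (exists A : {set {set 'rV[S4]_3}}, proj_arc 201 13 A) /\
  (exists A : {set {set 'rV[T4]_3}}, proj_arc 201 13 A).
Proof. by split; [exact: arc_G | split; [exact: arc_S | exact: arc_T]]. Qed.
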